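(* Let $p\ge 1$ and let $u,v,w\in E^p$. Then for every $\alpha\in[0,1]$, $$D(\alpha u+(1-\alpha)v,\,w)\le \sqrt{D(u,w)^2+D(v,w)^2}.$$
   Context: A fuzzy subset of $\mathbb{R}^p$ is a function $u:\mathbb{R}^p\to[0,1]$. Its $\alpha$-cut is $[u]_\alpha=\{x\in\mathbb{R}^p: u(x)\ge\alpha\}$ for $\alpha\in(0,1]$, and $[u]_0=\overline{\{x\in\mathbb{R}^p: u(x)>0\}}$. The set $E^p$ of $p$-dimensional fuzzy numbers consists of all fuzzy subsets $u$ of $\mathbb{R}^p$ such that $[u]_\alpha$ is a nonempty compact convex subset of $\mathbb{R}^p$ for every $\alpha\in[0,1]$. For $u,v\in E^p$ and $r\in\mathbb{R}$, $u+v$ and $r\cdot u$ are the elements of $E^p$ determined by $[u+v]_\alpha=\{x+y: x\in[u]_\alpha,\ y\in[v]_\alpha\}$ and $[r\cdot u]_\alpha=\{rx: x\in[u]_\alpha\}$ for all $\alpha\in[0,1]$. The sendograph of $u\in E^p$ is $\mathrm{send}\,u=\{(x,\alpha)\in[u]_0\times[0,1]: u(x)\ge\alpha\}\subset\mathbb{R}^{p+1}$, a nonempty compact set. For nonempty compact $U,V\subset\mathbb{R}^{p+1}$ (with the Euclidean metric $d$), the Hausdorff metric is $H(U,V)=\max\{H^*(U,V),H^*(V,U)\}$ with $H^*(U,V)=\sup_{a\in U}\inf_{b\in V}d(a,b)$. The sendograph metric on $E^p$ is $D(u,v)=H(\mathrm{send}\,u,\mathrm{send}\,v)$. *)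

(* Defs.v *)
From HB Require Import structures.
From mathcomp Require Import all_boot all_order all_algebra.
From mathcomp Require Import all_classical all_reals all_analysis.
Set Implicit Arguments. Unset Strict Implicit. Unset Printing Implicit Defensive.
Import Order.TTheory GRing.Theory Num.Theory.
Import numFieldNormedType.Exports.
Local Open Scope classical_set_scope.
Local Open Scope ring_scope.

Section Fuzzy.
Variables (R : realType) (p : nat).

Definition fuzzy := 'rV[R]_p -> R.

Definition cut (u : fuzzy) (a : R) : set 'rV[R]_p :=
  if 0 < a then [set x | a <= u x] else closure [set x | 0 < u x].

Definition convex_set (A : set 'rV[R]_p) : Prop :=
  forall x y t, A x -> A y -> 0 <= t <= 1 -> A (t *: x + (1 - t) *: y).

Definition fuzzy_number (u : fuzzy) : Prop :=
  (forall x, 0 <= u x <= 1) /\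
  forall a, 0 <= a <= 1 ->
    [/\ cut u a !=set0, compact (cut u a) & convex_set (cut u a)].

Definition is_fuzzy_add (u v z : fuzzy) : Prop :=
  fuzzy_number z /\
  forall a, 0 <= a <= 1 ->
    cut z a = [set x + y | x in cut u a & y in cut v a].

Definition is_fuzzy_scale (r : R) (u z : fuzzy) : Prop :=
  fuzzy_number z /\
  forall a, 0 <= a <= 1 -> cut z a = [set r *: x | x in cut u a].

(* points of R^{p+1} written as (x, alpha) with x in R^p *)
Definition edist (a b : 'rV[R]_p * R) : R :=
  Num.sqrt (\sum_(i < p) (a.1 0 i - b.1 0 i) ^+ 2 + (a.2 - b.2) ^+ 2).

Definition send (u : fuzzy) : set ('rV[R]_p * R) :=
  [set xa | cut u 0 xa.1 /\ 0 <= xa.2 <= 1 /\ xa.2 <= u xa.1].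

Definition hausdorff_half (U V : set ('rV[R]_p * R)) : R :=
  sup [set inf [set edist a b | b in V] | a in U].

Definition hausdorff (U V : set ('rV[R]_p * R)) : R :=
  Num.max (hausdorff_half U V) (hausdorff_half V U).

Definition sendD (u v : fuzzy) : R := hausdorff (send u) (send v).

End Fuzzy.

(* Main.v *)
Require Import Defs.
From HB Require Import structures.
From mathcomp Require Import all_boot all_order all_algebra.
From mathcomp Require Import all_classical all_reals all_analysis.
From mathcomp Require Import ring lra.
Import Order.TTheory GRing.Theory Num.Theory.
Import numFieldNormedType.Exports.
Local Open Scope ring_scope.
Local Open Scope classical_set_scope.

Section Helpers.
Variables (R : realType) (p : nat).
Local Notation pt := ('rV[R]_p * R)%type.

Lemma compb (A : set 'rV[R]_p) : compact A ->
  exists M, forall x, A x -> forall i, `|x 0 i| <= M.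
Proof.
move=> /compact_bounded [M [_ HM]].
exists (M+1) => x Ax i.
have := HM (M+1) ltac:(by rewrite ltrDl ltr01) x Ax. rewrite /= => h.
apply: le_trans h.
rewrite /Num.norm /=. rewrite mx_normrE.
exact: (le_bigmax _ (fun ij : 'I_1 * 'I_p => `|x ij.1 ij.2|) (0, i)).
Qed.

Lemma edist_ge0 (a b : pt) : 0 <= Defs.edist a b.
Proof. exact: sqrtr_ge0. Qed.

Lemma min_case (a1 a2 b1 b2 : R) : a1 <= a2 -> b2 <= b1 ->
  (a1 - b2) ^+ 2 <= (a1 - b1) ^+ 2 + (a2 - b2) ^+ 2.
Proof.
move=> h1 h2; have [h|h] := lerP 0 (a1 - b2).
  have h5 : 0 <= a2 - a1 by rewrite subr_ge0.
  have := mulr_ge0 h5 h.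
  have := sqr_ge0 (a2 - a1). have := sqr_ge0 (a1 - b1). nra.
have h3 : 0 <= b1 - b2 by rewrite subr_ge0.
have h4 : 0 <= b2 - a1 by rewrite subr_ge0; move: h; rewrite subr_lt0 => /ltW.
have := mulr_ge0 h3 h4. have := sqr_ge0 (b1 - b2). have := sqr_ge0 (a2 - b2). nra.
Qed.

Lemma comb_dist (al : R) (y y' b b' : 'rV[R]_p) (a1 a2 b1 b2 : R) :
  0 <= al <= 1 ->
  Defs.edist (al *: y + (1 - al) *: y', Num.min a1 a2)
        (al *: b + (1 - al) *: b', Num.min b1 b2)
  <= Num.sqrt (Defs.edist (y, a1) (b, b1) ^+ 2 + Defs.edist (y', a2) (b', b2) ^+ 2).
Proof.
move=> /andP [al0 al1].
rewrite /Defs.edist /= !sqr_sqrtr; last first.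
- by apply: addr_ge0; [apply: sumr_ge0 => i _|]; rewrite sqr_ge0.
- by apply: addr_ge0; [apply: sumr_ge0 => i _|]; rewrite sqr_ge0.
rewrite ler_sqrt; last first.
  by apply: addr_ge0; apply: addr_ge0; [apply: sumr_ge0 => i _| |apply: sumr_ge0 => i _|]; rewrite sqr_ge0.
have -> : \sum_(i < p) (y 0 i - b 0 i) ^+ 2 + (a1 - b1) ^+ 2 +
   (\sum_(i < p) (y' 0 i - b' 0 i) ^+ 2 + (a2 - b2) ^+ 2) =
   \sum_(i < p) ((y 0 i - b 0 i) ^+ 2 + (y' 0 i - b' 0 i) ^+ 2) +
   ((a1 - b1) ^+ 2 + (a2 - b2) ^+ 2).
  by rewrite big_split /=; ring.
apply: lerD.
  apply: ler_sum => i _; rewrite !mxE.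
  set s := y 0 i; set t := y' 0 i; set c := b 0 i; set d := b' 0 i.
  have -> : al * s + (1 - al) * t - (al * c + (1 - al) * d) =
            al * (s - c) + (1 - al) * (t - d) by ring.
  set X := s - c; set Y := t - d.
  rewrite -subr_ge0.
  have -> : X ^+ 2 + Y ^+ 2 - (al * X + (1 - al) * Y) ^+ 2 =
     al * (1 - al) * (X - Y) ^+ 2 + (1 - al) * X ^+ 2 + al * Y ^+ 2 by ring.
  have al1' : 0 <= 1 - al by rewrite subr_ge0.
  apply: addr_ge0; first apply: addr_ge0.
  + by apply: mulr_ge0; [exact: mulr_ge0| exact: sqr_ge0].
  + by apply: mulr_ge0 => //; exact: sqr_ge0.
  + by apply: mulr_ge0 => //; exact: sqr_ge0.
have [h1|h1] := lerP a1 a2; have [h2|h2] := lerP b1 b2.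
- by rewrite lerDl sqr_ge0.
- exact: min_case h1 (ltW h2).
- by rewrite [X in _ <= X]addrC; exact: min_case (ltW h1) h2.
- by rewrite lerDr sqr_ge0.
Qed.

Definition bnd (U : set pt) := exists M, forall P, U P ->
  (forall i, `|P.1 0 i| <= M) /\ 0 <= P.2 <= 1.

Lemma edist_bnd (U V : set pt) : bnd U -> bnd V ->
  exists B, forall P Q, U P -> V Q -> Defs.edist P Q <= B.
Proof.
move=> [M1 H1] [M2 H2].
exists (Num.sqrt (\sum_(i < p) (M1 + M2) ^+ 2 + 1)) => P Q UP VQ.
have [HP /andP [p0 p1]] := H1 P UP; have [HQ /andP [q0 q1]] := H2 Q VQ.
rewrite /Defs.edist ler_sqrt; last first.
  by apply: addr_ge0; [apply: sumr_ge0 => i _; rewrite sqr_ge0|].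
apply: lerD; last by nra.
apply: ler_sum => i _.
have := HP i; have := HQ i; rewrite !ler_norml => /andP [c1 c2] /andP [c3 c4].
nra.
Qed.

Lemma approx (U V : set pt) (K : R) (P : pt) (e : R) :
  bnd U -> bnd V -> V !=set0 -> hausdorff_half U V <= K -> U P -> 0 < e ->
  exists2 Q, V Q & Defs.edist P Q <= K + e.
Proof.
move=> bU bV [Q0 VQ0] hK UP e0.
have [B HB] := edist_bnd _ _ bU bV.
set E := [set Defs.edist P b | b in V].
have hE : has_inf E.
  split; first by exists (Defs.edist P Q0); exists Q0.
  by exists 0 => _ [b _ <-]; exact: edist_ge0.
have [_ [Q VQ <-] hQ] := inf_adherent e0 hE.
exists Q => //.
apply: (le_trans (ltW hQ)); rewrite lerD2r.
apply: le_trans hK.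
have hF : has_sup [set inf [set Defs.edist a b | b in V] | a in U].
  split; first by exists (inf E); exists P.
  exists B => _ [a Ua <-].
  apply: (le_trans _ (HB a Q0 Ua VQ0)).
  apply: ge_inf; last by exists Q0.
  by exists 0 => _ [b _ <-]; exact: edist_ge0.
by apply: (sup_upper_bound hF); exists P.
Qed.

Lemma hbound (U V : set pt) (K : R) : U !=set0 ->
  (forall P, U P -> forall e, 0 < e -> exists2 Q, V Q & Defs.edist P Q <= K + e) ->
  hausdorff_half U V <= K.
Proof.
move=> [P0 UP0] H.
apply: ge_sup; first by exists (inf [set Defs.edist P0 b | b in V]); exists P0.
move=> _ [a Ua <-].
apply/ler_addgt0Pr => e e0.
have [Q VQ hQ] := H a Ua e e0.
apply: le_trans hQ.
apply: ge_inf; last by exists Q.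
by exists 0 => _ [b _ <-]; exact: edist_ge0.
Qed.

Lemma cut_mono (u : fuzzy R p) (m b : R) (x : 'rV[R]_p) : 0 <= m <= b ->
  Defs.cut u b x -> Defs.cut u m x.
Proof.
move=> /andP [m0 mb]; rewrite /Defs.cut.
have [m0'|m0'] := ltrP 0 m.
  rewrite (lt_le_trans m0' mb) /= => h; exact: le_trans h.
have [b0|b0] := ltrP 0 b => h //.
apply: subset_closure => /=; exact: lt_le_trans h.
Qed.

Lemma sendP (u : fuzzy R p) (P : pt) : fuzzy_number u ->
  send u P <-> 0 <= P.2 <= 1 /\ Defs.cut u P.2 P.1.
Proof.
move=> [u01 _]; case: P => x a /=; rewrite /send /=; split.
  move=> [c0 [a01 au]]; split => //.
  rewrite /Defs.cut; case: ifP => // a0; by rewrite -/(Defs.cut u 0 x) /Defs.cut ltxx in c0.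
move=> [a01 c]; move: c; rewrite /Defs.cut.
have [a0|a0] := ltrP 0 a => h.
  split; last by split.
  rewrite ltxx; apply: subset_closure => /=; exact: lt_le_trans h.
split; first by rewrite ltxx.
split => //.
have -> : a = 0 by apply/eqP; rewrite eq_le a0; case/andP: a01.
by case/andP: (u01 x).
Qed.

Lemma send_bnd (u : fuzzy R p) : fuzzy_number u -> bnd (send u).
Proof.
move=> fu; have [_ hu] := fu.
have [_ cc _] := hu 0 ltac:(by rewrite lexx ler01).
have [M HM] := compb _ cc.
exists M => P /(sendP _ _ fu) [a01 c]; split => //.
apply: HM; apply: (cut_mono u 0 P.2) => //.
by rewrite lexx; case/andP: a01.
Qed.

Lemma send_ne (u : fuzzy R p) : fuzzy_number u -> send u !=set0.
Proof.
move=> fu; have [_ hu] := fu.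
have [[x cx] _ _] := hu 0 ltac:(by rewrite lexx ler01).
exists (x, 0); apply/(sendP _ _ fu) => /=; split => //.
by rewrite lexx ler01.
Qed.

Lemma zcutE (al : R) (u v ua vb z : fuzzy R p) (a : R) (x : 'rV[R]_p) : 0 <= a <= 1 ->
  is_fuzzy_scale al u ua -> is_fuzzy_scale (1 - al) v vb ->
  is_fuzzy_add ua vb z ->
  Defs.cut z a x <-> exists y y', [/\ Defs.cut u a y, Defs.cut v a y' &
                  x = al *: y + (1 - al) *: y'].
Proof.
move=> ha [_ hu] [_ hv] [_ hz].
rewrite (hz a ha) (hu a ha) (hv a ha); split.
  by move=> [_ [y yc <-] [_ [y' yc' <-] <-]]; exists y, y'.
by move=> [y [y' [yc yc' ->]]]; exists (al *: y); [exists y|exists ((1-al) *: y'); [exists y'|]].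
Qed.

Lemma final_est (D1 D2 S e1 e2 h : R) : D1 <= S -> D2 <= S -> 0 <= S ->
  S ^+ 2 = D1 ^+ 2 + D2 ^+ 2 -> 0 < h ->
  0 <= e1 <= D1 + h -> 0 <= e2 <= D2 + h ->
  Num.sqrt (e1 ^+ 2 + e2 ^+ 2) <= S + (h + h).
Proof.
move=> h1 h2 S0 hS h0 /andP [e10 e11] /andP [e20 e21].
rewrite -(ger0_norm (_ : 0 <= S + (h + h))); last by nra.
rewrite -sqrtr_sqr ler_sqrt; last by rewrite sqr_ge0.
have q1 : e1 ^+ 2 <= (D1 + h) ^+ 2 by nra.
have q2 : e2 ^+ 2 <= (D2 + h) ^+ 2 by nra.
nra.
Qed.

End Helpers.
Arguments approx {R p U V K} P {e}.
Arguments send_bnd {R p u}.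
Arguments send_ne {R p u}.
Arguments sendP {R p} u {P}.
Arguments zcutE {R p al u v ua vb z a} x.
Arguments cut_mono {R p} u m b {x}.
Arguments final_est {R D1 D2 S e1 e2 h}.
Arguments comb_dist {R p al y y' b b' a1 a2 b1 b2}.

Theorem theorem2p1 (R : realType) (p : nat) (hp : (1 <= p)%N)
  (u v w : fuzzy R p) (al : R) (ua vb z : fuzzy R p) :
  fuzzy_number u -> fuzzy_number v -> fuzzy_number w ->
  0 <= al <= 1 ->
  is_fuzzy_scale al u ua ->
  is_fuzzy_scale (1 - al) v vb ->
  is_fuzzy_add ua vb z ->
  sendD z w <= Num.sqrt (sendD u w ^+ 2 + sendD v w ^+ 2).
Proof.
move=> fu fv fw hal hsu hsv hz.
have fz : fuzzy_number z by case: hz.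
set D1 := sendD u w; set D2 := sendD v w.
set S := Num.sqrt (D1 ^+ 2 + D2 ^+ 2).
have S0 : 0 <= S by exact: sqrtr_ge0.
have hS : S ^+ 2 = D1 ^+ 2 + D2 ^+ 2 by rewrite sqr_sqrtr // addr_ge0 // sqr_ge0.
have D1S : D1 <= S.
  apply: (le_trans (ler_norm _)); rewrite -sqrtr_sqr ler_sqrt ?addr_ge0 ?sqr_ge0 //.
  by rewrite lerDl sqr_ge0.
have D2S : D2 <= S.
  apply: (le_trans (ler_norm _)); rewrite -sqrtr_sqr ler_sqrt ?addr_ge0 ?sqr_ge0 //.
  by rewrite lerDr sqr_ge0.
have [_ hw] := fw.
rewrite /sendD /hausdorff ge_max; apply/andP; split.
- apply: hbound; first exact: send_ne.
  move=> [x a] /(sendP _ fz) [a01 /= cz] e e0.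
  have [y [y' [cy cy' ->]]] := (zcutE x a01 hsu hsv hz).1 cz.
  have h0 : 0 < e / 2 by rewrite divr_gt0.
  have k1 : hausdorff_half (send u) (send w) <= D1.
    by rewrite /D1 /sendD /hausdorff le_max lexx.
  have k2 : hausdorff_half (send v) (send w) <= D2.
    by rewrite /D2 /sendD /hausdorff le_max lexx.
  have s1 : send u (y, a) by apply/(sendP _ fu).
  have s2 : send v (y', a) by apply/(sendP _ fv).
  have [[b b1] wb hb] := approx (y, a) (send_bnd fu) (send_bnd fw) (send_ne fw) k1 s1 h0.
  have [[b' b2] wb' hb'] := approx (y', a) (send_bnd fv) (send_bnd fw) (send_ne fw) k2 s2 h0.
  move: wb wb' => /(sendP _ fw) [b01 cb] /(sendP _ fw) [b02 cb'] /=.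
  move: cb cb' => /= cb cb'.
  have m01 : 0 <= Num.min b1 b2 <= 1.
    rewrite le_min ge_min; case/andP: b01 => -> ->; case/andP: b02 => -> _.
    done.
  exists (al *: b + (1 - al) *: b', Num.min b1 b2).
    apply/(sendP _ fw) => /=; split => //.
    have [_ _ cv] := hw _ m01.
    apply: cv; last by [].
      apply: (cut_mono _ _ b1) => //; rewrite ge_min lexx andbT.
      by case/andP: m01.
    apply: (cut_mono _ _ b2) => //; rewrite ge_min lexx orbT andbT.
    by case/andP: m01.
  rewrite -{1}(minxx a).
  apply: le_trans (comb_dist hal) _.
  rewrite [e]splitr; apply: (final_est D1S D2S S0 hS h0).
    by rewrite edist_ge0.
  by rewrite edist_ge0.
- apply: hbound; first exact: send_ne.
  move=> [b be] /(sendP _ fw) [be01 /= cb] e e0.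
  have h0 : 0 < e / 2 by rewrite divr_gt0.
  have k1 : hausdorff_half (send w) (send u) <= D1.
    by rewrite /D1 /sendD /hausdorff le_max lexx orbT.
  have k2 : hausdorff_half (send w) (send v) <= D2.
    by rewrite /D2 /sendD /hausdorff le_max lexx orbT.
  have s1 : send w (b, be) by apply/(sendP _ fw).
  have [[y a1] uy hy] := approx (b, be) (send_bnd fw) (send_bnd fu) (send_ne fu) k1 s1 h0.
  have [[y' a2] vy' hy'] := approx (b, be) (send_bnd fw) (send_bnd fv) (send_ne fv) k2 s1 h0.
  move: uy vy' => /(sendP _ fu) [a01 cy] /(sendP _ fv) [a02 cy'] /=.
  move: cy cy' => /= cy cy'.
  have m01 : 0 <= Num.min a1 a2 <= 1.
    rewrite le_min ge_min; case/andP: a01 => -> ->; case/andP: a02 => -> _.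
    done.
  exists (al *: y + (1 - al) *: y', Num.min a1 a2).
    apply/(sendP _ fz) => /=; split => //.
    apply/(zcutE _ m01 hsu hsv hz); exists y, y'; split => //.
      apply: (cut_mono _ _ a1) => //; rewrite ge_min lexx andbT.
      by case/andP: m01.
    apply: (cut_mono _ _ a2) => //; rewrite ge_min lexx orbT andbT.
    by case/andP: m01.
  have -> : (b, be) = (al *: b + (1 - al) *: b, Num.min be be).
    by rewrite minxx -scalerDl addrCA subrr addr0 scale1r.
  apply: le_trans (comb_dist hal) _.
  rewrite [e]splitr; apply: (final_est D1S D2S S0 hS h0).
    by rewrite edist_ge0.
  by rewrite edist_ge0.
Qed.
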